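(* Let $p$ be a prime, let $G$ be a cyclic group of order $p$, and let $S$ be an unsplittable minimal zero-sum sequence over $G$. Let $T$ be a subsequence of $S$ with $|\operatorname{supp}(T)|\ge 2$. Then there exists $g\in\operatorname{supp}(T)$ such that $|\Sigma(g^{-1}T)|\ge 2|g^{-1}T|-1$, where $g^{-1}T$ denotes the sequence $T$ with one copy of $g$ removed.
   Context: A sequence over $G$ is a finite unordered list of elements of $G$ with repetition allowed; $|T|$ is the length, $\sigma(T)$ the sum of terms, and $\operatorname{supp}(T)$ the set of elements occurring. $T$ is a subsequence of $S$ if each element occurs in $T$ at most as often as in $S$. $\Sigma(T)$ is the set of sums $\sigma(U)$ over all subsequences $U$ of $T$ with $|U|\ge1$. $S$ is a minimal zero-sum sequence if $\sigma(S)=0$ and no subsequence $U$ with $1\le|U|<|S|$ has $\sigma(U)=0$. A minimal zero-sum sequence $S$ is unsplittable if there do not exist $h\in\operatorname{supp}(S)$ and $y,z\in G$ with $y+z=h$ such that the sequence obtained from $S$ by replacing one copy of $h$ with the two terms $y,z$ is again a minimal zero-sum sequence. *)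

(* Defs.v *)
From mathcomp Require Import all_boot all_order all_algebra.
Set Implicit Arguments. Unset Strict Implicit. Unset Printing Implicit Defensive.
Import GRing.Theory.
Local Open Scope ring_scope.

(* Sequences over G are represented by lists (seq G), considered up to order:
   all notions below depend only on multiplicities. *)
Section Seqs.
Variable G : finZmodType.

Definition sigma (S : seq G) : G := \sum_(x <- S) x.

Definition supp (S : seq G) : {set G} := [set x in S].

Definition subseqm (T S : seq G) : Prop :=
  forall x : G, (count_mem x T <= count_mem x S)%N.

Definition sub_sum (S : seq G) (I : {set 'I_(size S)}) : G :=
  \sum_(i < size S | i \in I) nth 0 S i.

Definition Sigma (T : seq G) : {set G} :=
  [set sub_sum I | I : {set 'I_(size T)} & I != set0].

Definition minimal_zero_sum (S : seq G) : Prop :=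
  sigma S = 0 /\
  forall I : {set 'I_(size S)}, I != set0 -> I != setT -> sub_sum I != 0.

Definition unsplittable (S : seq G) : Prop :=
  minimal_zero_sum S /\
  ~ (exists h y z : G, [/\ h \in S, y + z = h & minimal_zero_sum (y :: z :: rem h S)]).
End Seqs.

(* Main.v *)
Require Import Defs.
From mathcomp Require Import all_boot all_order all_algebra all_fingroup.
From mathcomp Require Import cyclic zify.
Set Implicit Arguments. Unset Strict Implicit. Unset Printing Implicit Defensive.
Import GRing.Theory FinRing.Theory.
Local Open Scope ring_scope.

Section Lists.
Variable G : finZmodType.
Implicit Types (s t u : seq G) (x y : G).

Lemma sigma_nil : sigma ([::] : seq G) = 0. Proof. by rewrite /sigma big_nil. Qed.
Lemma sigma_cons x s : sigma (x :: s) = x + sigma s. Proof. by rewrite /sigma big_cons. Qed.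
Lemma sigma_cat s t : sigma (s ++ t) = sigma s + sigma t. Proof. by rewrite /sigma big_cat. Qed.
Lemma perm_sigma s t : perm_eq s t -> sigma s = sigma t.
Proof. by move=> H; rewrite /sigma (perm_big _ H). Qed.
Lemma sigma_nseq k x : sigma (nseq k x) = x *+ k.
Proof. by elim: k => [|k IH]; rewrite ?sigma_nil //= sigma_cons IH mulrS. Qed.

Fixpoint Asub s : {set G} :=
  if s is x :: s' then Asub s' :|: [set x + a | a in Asub s'] else [set 0].

Lemma Asub_sound s a : a \in Asub s -> exists t u, perm_eq s (t ++ u) /\ sigma t = a.
Proof.
elim: s a => [|x s IH] a /=.
  by rewrite inE => /eqP ->; exists [::], [::]; rewrite sigma_nil.
rewrite inE => /orP [/IH [t [u [Hp <-]]] | /imsetP [b /IH [t [u [Hp <-]]] ->]].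
  exists t, (x :: u); split=> //.
  apply: (@perm_trans _ ([:: x] ++ t ++ u)); first by rewrite /= perm_cons.
  by rewrite perm_catCA.
by exists (x :: t), u; rewrite sigma_cons /= perm_cons.
Qed.

Lemma Asub_complete s t u : perm_eq s (t ++ u) -> sigma t \in Asub s.
Proof.
elim: s t u => [|x s IH] t u /=.
  move=> H; have := perm_size H; rewrite size_cat /=.
  by case: t H => [|? ?] //= _ _; rewrite sigma_nil inE.
move=> H; have xin : x \in t ++ u by rewrite -(perm_mem H) mem_head.
rewrite mem_cat in xin; case/orP: xin => xin.
  have Ht := perm_to_rem xin.
  have H2 : perm_eq (x :: s) (x :: (rem x t ++ u)).
    by apply: (perm_trans H); rewrite -cat_cons perm_cat2r.
  rewrite perm_cons in H2.
  rewrite (perm_sigma Ht) sigma_cons inE; apply/orP; right.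
  by apply/imsetP; exists (sigma (rem x t)) => //; apply: IH H2.
have Hu := perm_to_rem xin.
have H2 : perm_eq (x :: s) (x :: (t ++ rem x u)).
  apply: (perm_trans H); apply: (@perm_trans _ (t ++ x :: rem x u)).
    by rewrite perm_cat2l.
  by rewrite -cat1s perm_catCA.
rewrite perm_cons in H2.
by rewrite inE (IH _ _ H2).
Qed.

Lemma perm_Asub s s' : perm_eq s s' -> Asub s = Asub s'.
Proof.
move=> H; apply/setP => a; apply/idP/idP => /Asub_sound [t [u [Hp <-]]];
  apply: (Asub_complete (u:=u)).
  by apply: perm_trans Hp; rewrite perm_sym.
by apply: perm_trans Hp.
Qed.

Lemma Asub0 s : 0 \in Asub s.
Proof. by rewrite -sigma_nil; apply: (Asub_complete (u:=s)). Qed.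

Lemma Asub_sigma s : sigma s \in Asub s.
Proof. by apply: (Asub_complete (u:=[::])); rewrite cats0. Qed.

Lemma Asub_cat s1 s2 a : a \in Asub (s1 ++ s2) ->
  exists a1 a2, [/\ a1 \in Asub s1, a2 \in Asub s2 & a = a1 + a2].
Proof.
elim: s1 a => [|x s1 IH] a /=.
  by move=> H; exists 0, a; rewrite inE eqxx add0r.
rewrite inE => /orP [/IH [a1 [a2 [H1 H2 ->]]] | /imsetP [b /IH [a1 [a2 [H1 H2 ->]]] ->]].
  by exists a1, a2; rewrite inE H1.
exists (x + a1), a2; split=> //; last by rewrite addrA.
by rewrite inE; apply/orP; right; apply/imsetP; exists a1.
Qed.

Lemma Asub_nseq k x a : a \in Asub (nseq k x) -> exists2 i, (i <= k)%N & a = x *+ i.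
Proof.
elim: k a => [|k IH] a /=.
  by rewrite inE => /eqP ->; exists 0%N.
rewrite inE => /orP [/IH [i Hi ->] | /imsetP [b /IH [i Hi ->] ->]].
  by exists i => //; apply: leqW.
by exists i.+1; rewrite ?mulrS.
Qed.

Lemma Asub_nseq_in k x i : (i <= k)%N -> x *+ i \in Asub (nseq k x).
Proof.
move=> Hi; rewrite -sigma_nseq; apply: (Asub_complete (u:= nseq (k - i) x)).
by rewrite -nseqD subnKC.
Qed.

Definition zsf s := forall t u, perm_eq s (t ++ u) -> sigma t = 0 -> t = [::].

Lemma zsf_perm s s' : perm_eq s s' -> zsf s -> zsf s'.
Proof. by move=> H Z t u Hp; apply: Z; apply: perm_trans Hp. Qed.

Lemma zsf_consE x s : zsf (x :: s) -> zsf s /\ - x \notin Asub s.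
Proof.
move=> Z; split.
  move=> t u Hp Ht; apply: (Z t (x :: u)) => //.
  apply: (@perm_trans _ ([:: x] ++ t ++ u)); first by rewrite /= perm_cons.
  by rewrite perm_catCA.
apply/negP => /Asub_sound [t [u [Hp Ht]]].
have := Z (x :: t) u; rewrite /= perm_cons => /(_ Hp).
by rewrite sigma_cons Ht subrr => /(_ erefl).
Qed.

Lemma zsf_consI x s : zsf s -> - x \notin Asub s -> zsf (x :: s).
Proof.
move=> Z Nx t u H Ht.
have xin : x \in t ++ u by rewrite -(perm_mem H) mem_head.
rewrite mem_cat in xin; case/orP: xin => xin.
  have Ht' := perm_to_rem xin.
  have H2 : perm_eq (x :: s) (x :: (rem x t ++ u)).
    by apply: (perm_trans H); rewrite -cat_cons perm_cat2r.
  rewrite perm_cons in H2.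
  have := Asub_complete H2; rewrite (perm_sigma Ht') sigma_cons in Ht.
  have -> : sigma (rem x t) = - x by apply/eqP; rewrite -addr_eq0 addrC Ht.
  by rewrite (negbTE Nx).
have Hu := perm_to_rem xin.
have H2 : perm_eq (x :: s) (x :: (t ++ rem x u)).
  apply: (perm_trans H); apply: (@perm_trans _ (t ++ x :: rem x u)).
    by rewrite perm_cat2l.
  by rewrite -cat1s perm_catCA.
rewrite perm_cons in H2.
exact: Z H2 Ht.
Qed.

End Lists.

Section Index.
Variable G : finZmodType.
Implicit Types (s t u : seq G) (x y : G).

Definition lset n (I : {set 'I_n.+1}) : {set 'I_n} := [set j | lift ord0 j \in I].
Definition mkI n (b : bool) (J : {set 'I_n}) : {set 'I_n.+1} :=
  [set i | if unlift ord0 i is Some j then j \in J else b].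

Lemma mkI0 n b (J : {set 'I_n}) : (ord0 \in mkI b J) = b.
Proof. by rewrite inE unlift_none. Qed.
Lemma lset_mkI n b (J : {set 'I_n}) : lset (mkI b J) = J.
Proof. by apply/setP => j; rewrite !inE liftK. Qed.
Lemma mkI_lset n (I : {set 'I_n.+1}) : mkI (ord0 \in I) (lset I) = I.
Proof.
apply/setP => i; rewrite inE; case: unliftP => [j ->|->] //.
by rewrite inE.
Qed.

Lemma sub_sum_cons x s (I : {set 'I_(size s).+1}) :
  @sub_sum G (x :: s) I = (if ord0 \in I then x else 0) + @sub_sum G s (lset I).
Proof.
rewrite /sub_sum big_mkcond big_ord_recl /=; congr (_ + _).
rewrite [RHS]big_mkcond; apply: eq_bigr => j _; rewrite inE.
by [].
Qed.

Lemma sub_sumT s : @sub_sum G s setT = sigma s.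
Proof.
rewrite /sub_sum /sigma (big_nth 0) big_mkord.
by apply: eq_bigl => i; rewrite inE.
Qed.

Lemma sub_sum0 s : @sub_sum G s set0 = 0.
Proof. by rewrite /sub_sum big_pred0 // => i; rewrite inE. Qed.

Lemma sub_sumC s (J : {set 'I_(size s)}) : @sub_sum G s J + @sub_sum G s (~: J) = sigma s.
Proof.
rewrite -sub_sumT /sub_sum [in RHS](bigID (fun i => i \in J)) /=.
congr (_ + _); apply: eq_bigl => i; rewrite !inE //.
Qed.

Definition SS s : {set G} := [set @sub_sum G s I | I : {set 'I_(size s)}].

Lemma SS_nil : SS [::] = [set 0].
Proof.
apply/setP => a; rewrite inE; apply/imsetP/eqP => [[I _ ->]|->].
  by rewrite /sub_sum big_ord0.
by exists set0; rewrite ?sub_sum0.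
Qed.

Lemma SS_cons x s : SS (x :: s) = SS s :|: [set x + a | a in SS s].
Proof.
apply/setP => a; rewrite inE; apply/imsetP/orP.
  case=> I _ ->; rewrite sub_sum_cons; case: (ord0 \in I).
    by right; apply/imsetP; exists (sub_sum (lset I)) => //; apply/imsetP; exists (lset I).
  by left; rewrite add0r; apply/imsetP; exists (lset I).
case=> [/imsetP [J _ ->] | /imsetP [b /imsetP [J _ ->] ->]].
  by exists (mkI false J) => //; rewrite sub_sum_cons mkI0 lset_mkI add0r.
by exists (mkI true J) => //; rewrite sub_sum_cons mkI0 lset_mkI.
Qed.

Lemma SS_Asub s : SS s = Asub s.
Proof. by elim: s => [|x s IH]; rewrite ?SS_nil // SS_cons IH. Qed.

Definition Izsf s := forall I : {set 'I_(size s)}, I != set0 -> @sub_sum G s I != 0.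

Lemma mkI_neq0 n (J : {set 'I_n}) : J != set0 -> mkI false J != set0.
Proof.
apply: contra => /eqP H; apply/eqP; rewrite -(lset_mkI false J) H.
by apply/setP => j; rewrite !inE.
Qed.

Lemma lset_neq0 n (I : {set 'I_n.+1}) : ord0 \notin I -> I != set0 -> lset I != set0.
Proof.
move=> H0; apply: contra => /eqP H; apply/eqP; rewrite -(mkI_lset I) H (negbTE H0).
by apply/setP => i; rewrite !inE; case: unliftP => [j _|_]; rewrite ?inE.
Qed.

Lemma Izsf_consE x s : Izsf (x :: s) -> Izsf s /\ - x \notin SS s.
Proof.
move=> Z; split.
  move=> J HJ; have := Z (mkI false J) (mkI_neq0 HJ).
  by rewrite sub_sum_cons mkI0 lset_mkI add0r.
apply/imsetP => [[J _ HJ]].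
have : mkI true J != set0 by apply/set0Pn; exists ord0; rewrite mkI0.
move/Z; rewrite sub_sum_cons mkI0 lset_mkI -HJ subrr.
by rewrite eqxx.
Qed.

Lemma Izsf_consI x s : Izsf s -> - x \notin SS s -> Izsf (x :: s).
Proof.
move=> Z Nx I HI; rewrite sub_sum_cons.
case: ifP => H0.
  apply/negP => /eqP H; move: Nx; rewrite -(_ : sub_sum (lset I) = - x).
    by rewrite (_ : (_ \in _) = true) //; apply/imsetP; exists (lset I).
  by apply/eqP; rewrite -addr_eq0 addrC H.
by rewrite add0r; apply: Z; apply: lset_neq0 => //; rewrite H0.
Qed.

Lemma Izsf_zsf s : Izsf s <-> zsf s.
Proof.
elim: s => [|x s IH].
  split=> _.
    by move=> t u H; have := perm_size H; rewrite size_cat; case: t H.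
  by move=> I; rewrite (_ : I = set0) ?eqxx //; apply/setP => -[].
split.
  by case/Izsf_consE => /IH Z; rewrite SS_Asub; apply: zsf_consI.
by case/zsf_consE => /IH Z; rewrite -SS_Asub; apply: Izsf_consI.
Qed.

Lemma minimal_cons x s :
  minimal_zero_sum (x :: s) <-> sigma (x :: s) = 0 /\ Izsf s.
Proof.
split.
  case=> Hs Z; split => // J HJ.
  have := Z (mkI false J) (mkI_neq0 HJ).
  rewrite sub_sum_cons mkI0 lset_mkI add0r; apply.
  by apply/negP => /eqP H; move: (in_setT (@ord0 (size s))); rewrite -H mkI0.
case=> Hs Z; split => // I HI HT.
rewrite sub_sum_cons; case: ifP => H0; last first.
  by rewrite add0r; apply: Z; apply: lset_neq0 => //; rewrite H0.
have HJ : ~: lset I != set0.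
  apply: contra HT => /eqP H; apply/eqP.
  have Hl : lset I = setT.
    apply/setP => j; rewrite in_setT; case: (boolP (j \in lset I)) => // Hj.
    have : j \in ~: lset I by rewrite inE Hj.
    by rewrite H inE.
  rewrite -(mkI_lset I) H0 Hl.
  by apply/setP => i; rewrite !inE; case: (unlift _ i) => [j|]; rewrite ?in_setT.
have := Z _ HJ; apply: contra => /eqP H.
move: Hs; rewrite sigma_cons -(sub_sumC (lset I)) addrA H add0r => ->.
by [].
Qed.

Lemma Asub_Sigma s a : a \in Asub s -> a != 0 -> a \in Sigma s.
Proof.
rewrite -SS_Asub => /imsetP [I _ ->] Ha; apply/imsetP; exists I => //.
rewrite inE; apply: contra Ha => /eqP ->; by rewrite sub_sum0.
Qed.

Lemma card_Asub_Sigma s : (#|Asub s| <= #|Sigma s|.+1)%N.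
Proof.
apply: (@leq_trans #|0 |: Sigma s|); last by rewrite cardsU1; case: (_ \in _).
apply: subset_leq_card; apply/subsetP => a Ha; rewrite !inE.
by case: eqP => //= /eqP Ha0; apply: Asub_Sigma.
Qed.

End Index.

Section Grp.
Variables (p : nat) (G : finZmodType).
Hypotheses (pr : prime p) (cardG : #|[set: G]| = p).

Lemma order_p (y : G) : y != 0 -> #[y]%g = p.
Proof.
move=> y0; have := order_dvdG (in_setT y); rewrite cardG.
have H1 : #[y]%g != 1%N by rewrite order_eq1.
by move/(prime_nt_dvdP pr H1).
Qed.

Lemma mulrn_eq0p (y : G) k : y != 0 -> (y *+ k == 0) = (p %| k)%N.
Proof. by move=> y0; rewrite -(order_p y0) order_dvdn zmodXgE zmod1gE. Qed.

Lemma mulrn_p (y : G) : y *+ p = 0.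
Proof.
case: (eqVneq y 0) => [->|y0]; first by rewrite mul0rn.
by apply/eqP; rewrite mulrn_eq0p.
Qed.

Lemma mulrn_inj (y : G) i j : y != 0 -> (i < p)%N -> (j < p)%N -> y *+ i = y *+ j -> i = j.
Proof.
move=> y0 ip jp H.
have : ((y ^+ i)%g == (y ^+ j)%g) by rewrite !zmodXgE H.
by rewrite eq_expg_mod_order (order_p y0) !modn_small // => /eqP.
Qed.

Lemma mulrn_gen (y x : G) : y != 0 -> exists2 k, (k < p)%N & x = y *+ k.
Proof.
move=> y0; have : x \in <[y]>%g.
  suff -> : <[y]>%g = [set: G] by rewrite in_setT.
  by apply/eqP; rewrite eqEcard subsetT cardG -(order_p y0) leqnn.
case/cycleP => i ->; exists (i %% p)%N; first by rewrite ltn_mod prime_gt0.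
by rewrite -zmodXgE -(order_p y0) expg_mod_order zmodXgE.
Qed.

End Grp.

Section SR.
Variables (p : nat) (G : finZmodType).
Hypotheses (pr : prime p) (cardG : #|[set: G]| = p).

Definition APlt (y : G) (N : nat) (A : {set G}) :=
  forall x, x \in A <-> exists2 k, (k < N)%N & x = y *+ k.

Lemma card_APlt y N A : y != 0 -> (N <= p)%N -> APlt y N A -> #|A| = N.
Proof.
move=> y0 Np HA.
have -> : A = [set y *+ (val k) | k : 'I_N].
  apply/setP => x; apply/idP/imsetP.
    by case/HA => k kN ->; exists (Ordinal kN).
  by case=> k _ ->; apply/HA; exists k.
rewrite card_imset ?card_ord // => k1 k2 /(mulrn_inj pr cardG y0) H.
apply: val_inj; apply: H; [exact: leq_trans (ltn_ord k1) Np | exact: leq_trans (ltn_ord k2) Np].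
Qed.

Lemma APU y z N A : y != 0 -> z != 0 -> (N < p)%N -> (2 <= N)%N ->
  APlt y N A -> APlt z N A -> y = z.
Proof.
move=> y0 z0 Np N2 Hy Hz.
have : z \in A by apply/Hz; exists 1%N.
case/Hy => j jN zj.
have j0 : (0 < j)%N by case: j zj jN => [|j'] // zj _; move: z0; rewrite zj mulr0n eqxx.
have : y *+ (N - j) \in A by apply/Hy; exists (N - j)%N => //; lia.
case/Hz => k kN xk.
have Hsum : z *+ k.+1 = y *+ N by rewrite mulrSr -xk zj -mulrnDr; congr (_ *+ _); lia.
case: (ltnP k.+1 N) => kN'.
  have : z *+ k.+1 \in A by apply/Hz; exists k.+1.
  case/Hy => i iN; rewrite Hsum => /(mulrn_inj pr cardG y0) H.
  by have := H Np (ltn_trans iN Np); lia.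
have kE : k.+1 = N by lia.
case: (eqVneq y z) => // yz.
have yz0 : y - z != 0 by rewrite subr_eq0.
have : (y - z) *+ N == 0 by rewrite mulrnBl -kE Hsum kE subrr.
rewrite (mulrn_eq0p pr cardG _ yz0) => /dvdn_leq; lia.
Qed.

Lemma SR (y : G) (B : {set G}) : y != 0 -> 0 \in B -> - y \notin B ->
  (#|B :|: [set (y + b)%R | b in B]| <= #|B|.+1)%N ->
  APlt y #|B|.+1 (B :|: [set y + b | b in B]).
Proof.
move=> y0 B0 yB Hc.
set C := [set y + b | b in B].
have exP : exists e, y *+ e \notin B.
  exists p.-1; suff -> : y *+ p.-1 = - y by [].
  apply/eqP; rewrite -addr_eq0 -mulrSr prednK ?prime_gt0 //.
  by rewrite (mulrn_p pr cardG).
case: (ex_minnP exP) => e He Hmin.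
have inB : forall i, (i < e)%N -> y *+ i \in B.
  move=> i ie; apply/negPn/negP => Hi; have := Hmin _ Hi; lia.
have e0 : (0 < e)%N by case: e He {Hmin inB} => //; rewrite mulr0n B0.
have ep : (e < p)%N.
  have := Hmin p.-1; rewrite (_ : y *+ p.-1 = - y).
    by move/(_ yB); have := prime_gt1 pr; lia.
  apply/eqP; rewrite -addr_eq0 -mulrSr prednK ?prime_gt0 //.
  by rewrite (mulrn_p pr cardG).
have Pe : y *+ e = y + y *+ e.-1 by rewrite -mulrS prednK.
have PeC : y *+ e \in C by apply/imsetP; exists (y *+ e.-1) => //; apply: inB; lia.
have Claim1 : forall c, c \in C -> c \notin B -> c = y *+ e.
  move=> c cC cB; apply/eqP; apply/negP => /negP ce.
  have : (#|c |: (y *+ e |: B)| <= #|B :|: C|)%N.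
    apply: subset_leq_card; apply/subsetP => w; rewrite !inE.
    by case/orP => [/eqP ->|/orP [/eqP ->|->]]; rewrite ?cC ?PeC ?orbT.
  rewrite cardsU1 cardsU1 !inE (negbTE cB) (negbTE He) (negbTE ce) /=.
  by move: Hc; rewrite -/C => H1 H2; have := leq_trans H2 H1; rewrite !add1n ltnn.
have step : forall w, w \in B -> (forall i, (i < e)%N -> w != y *+ i) ->
    w + y \in B /\ (forall i, (i < e)%N -> w + y != y *+ i).
  move=> w wB wn.
  have wyB : w + y \in B.
    apply/negPn/negP => H.
    have wyC : w + y \in C by apply/imsetP; exists w => //; rewrite addrC.
    have := Claim1 _ wyC H; rewrite Pe addrC => /addrI Hw.
    by have := wn e.-1; rewrite Hw eqxx ltn_predL e0; move/(_ isT).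
  split=> // i ie; apply/eqP => Hi.
  case: i ie Hi => [|i] ie Hi.
    by move: wB; rewrite (_ : w = - y) ?(negbTE yB) //; apply/eqP; rewrite -addr_eq0 Hi mulr0n.
  move: Hi; rewrite mulrSr => /addIr Hw.
  by have := wn i (ltnW ie); rewrite Hw eqxx.
have Claim2 : forall x, x \in B -> exists2 i, (i < e)%N & x = y *+ i.
  move=> x xB; case: (boolP [exists i : 'I_e, x == y *+ i]) => [/existsP [i /eqP ->]|Hn].
    by exists i.
  have xn : forall i, (i < e)%N -> x != y *+ i.
    move=> i ie; apply/negP => /eqP Hx; move/negP: Hn; apply.
    by apply/existsP; exists (Ordinal ie); rewrite Hx.
  have all : forall j, x + y *+ j \in B /\ (forall i, (i < e)%N -> x + y *+ j != y *+ i).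
    elim=> [|j [IH1 IH2]]; first by rewrite addr0.
    by rewrite mulrSr addrA; apply: step.
  case: (mulrn_gen pr cardG (- x) y0) => j _ Hj.
  by have := (all j).2 0%N e0; rewrite -Hj subrr mulr0n eqxx.
have cardB : #|B| = e.
  apply: (card_APlt y0 (ltnW ep)) => x; split; first exact: Claim2.
  by case=> k ke ->; apply: inB.
rewrite cardB => x; split.
  rewrite inE => /orP [/Claim2 [k ke ->]|/imsetP [b /Claim2 [k ke ->] ->]].
    by exists k => //; apply: ltnW.
  by exists k.+1; rewrite ?mulrS.
case=> k; rewrite ltnS leq_eqVlt => /orP [/eqP ->|ke] ->.
  by rewrite inE PeC orbT.
by rewrite inE inB.
Qed.
End SR.

Section ListAux.
Variable T : eqType.
Implicit Types (s t u : seq T) (x y : T).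

Lemma cnt_pos x s : (0 < count_mem x s)%N = (x \in s).
Proof. by rewrite -has_count has_pred1. Qed.

Lemma perm_rem x s1 s2 : perm_eq s1 s2 -> perm_eq (rem x s1) (rem x s2).
Proof.
move=> H; apply/seq.permP => P; rewrite !count_rem (perm_mem H).
by move/seq.permP: H => ->.
Qed.

Lemma in_rem x y s : x != y -> x \in s -> x \in rem y s.
Proof.
move=> xy xs; rewrite -cnt_pos count_rem /= eq_sym (negbTE xy) andbF subn0 cnt_pos.
exact: xs.
Qed.

Lemma in_rem2 x s : (1 < count_mem x s)%N -> x \in rem x s.
Proof.
move=> H; have xs : x \in s by rewrite -cnt_pos; apply: ltnW.
by rewrite -cnt_pos count_rem xs /= eqxx; lia.
Qed.

Lemma subseqm_perm s t : (forall x, count_mem x t <= count_mem x s)%N ->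
  exists u, perm_eq s (t ++ u).
Proof.
elim: t s => [|x t IH] s H; first by exists s.
have xs : x \in s by rewrite -cnt_pos; have := H x; rewrite /= eqxx; lia.
have [u Hu] : exists u, perm_eq (rem x s) (t ++ u).
  apply: IH => y; have := H y; rewrite count_rem xs /=.
  by case: (x == y) => /=; lia.
exists u; apply: perm_trans (perm_to_rem xs) _; by rewrite /= perm_cons.
Qed.

Definition dist2 s := exists a b, [/\ a \in s, b \in s & a != b].

Lemma dist2_size s : dist2 s -> (2 <= size s)%N.
Proof.
case=> a [b [ha hb ab]]; case: s ha hb ab => [|c [|d s]] //=.
by rewrite !inE => /eqP -> /eqP ->; rewrite eqxx.
Qed.

Lemma caseOne s a b : a \in s -> b \in s -> a != b -> count_mem a s = 1%N ->
  (3 <= size s)%N ->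
  (exists y z, [/\ y != z, y \in s, z \in s, dist2 (rem y s) & dist2 (rem z s)]) \/
  (exists c d, c != d /\ perm_eq s (c :: nseq (size s).-1 d)).
Proof.
move=> ha hb ab ca s3.
case: (boolP (has (fun c => (c != a) && (c != b)) s)).
  case/hasP => c hc /andP [ca' cb]; left; exists b, c; split=> //.
  - by rewrite eq_sym.
  - by exists a, c; split; rewrite ?in_rem // eq_sym.
  - by exists a, b; split; rewrite ?in_rem // eq_sym.
move/hasPn => Hall; right; exists a, b; split=> //.
apply: perm_trans (perm_to_rem ha) _; rewrite perm_cons -(size_rem ha).
have -> // : rem a s = nseq (size (rem a s)) b.
apply/all_pred1P/allP => x hx /=.
have := Hall x (mem_rem hx); rewrite negb_and !negbK => /orP [/eqP xa|xb //].
move: hx; rewrite xa -cnt_pos count_rem ha /= eqxx ca; lia.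
by rewrite size_nseq.
Qed.

Lemma find2 s : (3 <= size s)%N -> dist2 s ->
  (exists y z, [/\ y != z, y \in s, z \in s, dist2 (rem y s) & dist2 (rem z s)]) \/
  (exists c d, c != d /\ perm_eq s (c :: nseq (size s).-1 d)).
Proof.
move=> s3 [a [b [ha hb ab]]].
case: (ltnP 1 (count_mem a s)) => Ca; case: (ltnP 1 (count_mem b s)) => Cb.
- have ba : b != a by rewrite eq_sym.
  left; exists a, b; split=> //.
    by exists a, b; split; [exact: in_rem2 | exact: in_rem | exact: ab].
  by exists a, b; split; [exact: in_rem | exact: in_rem2 | exact: ab].
- apply: (caseOne hb ha) => //; first by rewrite eq_sym.
  by have := cnt_pos b s; rewrite hb; lia.
- apply: (caseOne ha hb) => //.
  by have := cnt_pos a s; rewrite ha; lia.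
- apply: (caseOne ha hb) => //.
  by have := cnt_pos a s; rewrite ha; lia.
Qed.

Lemma count_nseq_perm s c d k : c != d -> perm_eq s (c :: nseq k d) -> count_mem d s = k.
Proof.
move=> cd /seq.permP H; rewrite H /= (negbTE cd) add0n count_nseq /= eqxx; lia.
Qed.

Lemma find1 s : (3 <= size s)%N -> dist2 s -> exists2 x, x \in s & dist2 (rem x s).
Proof.
move=> s3 D; case: (find2 s3 D) => [[y [z [_ hy _ Dy _]]]|[c [d [cd H]]]].
  by exists y.
have Cd := count_nseq_perm cd H.
have cs : c \in s by rewrite (perm_mem H) mem_head.
have k2 : (1 < count_mem d s)%N by rewrite Cd; lia.
have ds : d \in s by rewrite -cnt_pos; lia.
exists d => //; exists c, d; split; [exact: in_rem | exact: in_rem2 | exact: cd].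
Qed.

End ListAux.

Section Main.
Variables (p : nat) (G : finZmodType) (S : seq G).
Hypotheses (pr : prime p) (cardG : #|[set: G]| = p).
Hypothesis Hmin : forall t u, perm_eq S (t ++ u) -> sigma t = 0 -> t = [::] \/ u = [::].
Hypothesis Hsig : sigma S = 0.
Implicit Types (s t u U V R : seq G) (x y : G).

Lemma cat_nil2 (s1 s2 : seq G) : s1 ++ s2 = [::] -> s1 = [::] /\ s2 = [::].
Proof. by case: s1 => //; case: s2. Qed.

Lemma zsf_proper t u : perm_eq S (t ++ u) -> u != [::] -> zsf t.
Proof.
move=> H u0 t1 t2 Ht Hs.
have H2 : perm_eq S (t1 ++ (t2 ++ u)).
  by apply: perm_trans H _; rewrite catA perm_cat2r.
case: (Hmin H2 Hs) => // /cat_nil2 [_ u0'].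
by rewrite u0' eqxx in u0.
Qed.

Lemma nonzero x : (2 <= size S)%N -> x \in S -> x != 0.
Proof.
move=> S2 xS; apply/eqP => x0.
have H : perm_eq S ([:: x] ++ rem x S) by exact: perm_to_rem.
case: (Hmin H); rewrite /sigma ?big_seq1 // => R0.
by have := size_rem xS; rewrite R0 /=; lia.
Qed.

Lemma Asub_not_full U R : perm_eq S (U ++ R) -> (2 <= size R)%N -> Asub U != setT.
Proof.
case: R => [|w [|w' R]] //= H _.
have Z : zsf (w :: U).
  apply: (zsf_proper (u := w' :: R)) => //.
  by apply: perm_trans H _; rewrite -cat1s perm_catCA.
case/zsf_consE: Z => _ Hw; apply: contra Hw => /eqP ->.
by rewrite in_setT.
Qed.

Lemma card_lt_p (A : {set G}) : A != setT -> (#|A| < p)%N.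
Proof.
by move=> H; rewrite -cardG; apply: proper_card; rewrite properEneq H subsetT.
Qed.

Hypothesis Hsplit : forall h, h \in S -> Asub (rem h S) = setT.

Lemma obstruct h V R (t : G) : perm_eq S ((h :: V) ++ R) -> R != [::] ->
  (forall b, b \in Asub V -> exists u' w',
     [/\ perm_eq (h :: V) (u' ++ w'), u' != [::], w' != [::] & sigma u' = t + b]) ->
  False.
Proof.
move=> H R0 Hb.
have hS : h \in S by rewrite (perm_mem H) mem_head.
have Hr : perm_eq (rem h S) (V ++ R).
  by have := perm_rem h H; rewrite /= eqxx.
have := in_setT (- t); rewrite -(Hsplit hS) (perm_Asub Hr).
case/Asub_cat => b [r [bV rR Htr]].
case: (Hb b bV) => u' [w' [Hp u0 w0 Hs]].
case/Asub_sound: rR => r1 [r2 [Hr12 Hr1]].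
have H2 : perm_eq S ((u' ++ r1) ++ (w' ++ r2)).
  apply: perm_trans H _; rewrite perm_sym perm_catACA perm_sym.
  by apply: perm_cat.
have Hs0 : sigma (u' ++ r1) = 0.
  by rewrite sigma_cat Hs Hr1 -addrA -Htr subrr.
case: (Hmin H2 Hs0) => /cat_nil2 [E _].
  by rewrite E in u0.
by rewrite E in w0.
Qed.


Lemma perm_split_nseq (c d : G) e i : (i <= e)%N ->
  perm_eq (c :: nseq e d) (nseq i d ++ c :: nseq (e - i) d).
Proof.
move=> ie; rewrite -{1}(subnKC ie) nseqD -cat1s perm_catCA.
exact: perm_refl.
Qed.

Lemma base a b R : perm_eq S ([:: a; b] ++ R) -> R != [::] -> a != b ->
  (4 <= #|Asub [:: a; b]|)%N.
Proof.
move=> H R0 ab.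
have Z := zsf_proper H R0.
have S2 : (2 <= size S)%N by rewrite (perm_size H).
have a0 : a != 0 by apply: nonzero; rewrite // (perm_mem H) mem_head.
have b0 : b != 0 by apply: nonzero; rewrite // (perm_mem H) !inE eqxx orbT.
have ab0 : a + b != 0.
  apply/eqP => E; have := Z [:: a; b] [::]; rewrite cats0 /sigma !big_cons big_nil addr0.
  by move=> /(_ (perm_refl _) E).
have sub : 0 |: (a |: (b |: [set a + b])) \subset Asub [:: a; b].
  apply/subsetP => x Hx; rewrite !in_setU1 in_set1 in Hx.
  case/or4P: Hx => /eqP ->.
  - exact: Asub0.
  - by have := @Asub_complete _ [:: a; b] [:: a] [:: b] (perm_refl _); rewrite /sigma big_seq1.
  - have := @Asub_complete _ [:: a; b] [:: b] [:: a]; rewrite /sigma big_seq1; apply.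
    by rewrite perm_sym perm_catC.
  - by have := Asub_sigma [:: a; b]; rewrite /sigma !big_cons big_nil addr0.
apply: leq_trans (subset_leq_card sub).
have h1 : (a == a + b) = false.
  by apply/negbTE/eqP => E; move: b0; rewrite -{1}(addr0 a) in E; move/addrI: E => <-; rewrite eqxx.
have h2 : (b == a + b) = false.
  by apply/negbTE/eqP => E; move: a0; rewrite -{1}(add0r b) in E; move/addIr: E => <-; rewrite eqxx.
rewrite !cardsU1 cards1 !inE h1 h2 (negbTE ab) !(eq_sym 0) (negbTE a0) (negbTE b0) (negbTE ab0).
by [].
Qed.

Lemma caseB c d k R : perm_eq S ((c :: nseq k d) ++ R) -> R != [::] -> c != d ->
  (2 <= k)%N -> (2 * k.+1 <= #|Asub (c :: nseq k d)|)%N.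
Proof.
move=> H R0 cd k2.
have Z := zsf_proper H R0.
have dn : forall i, (0 < i)%N -> (i <= k)%N -> d *+ i != 0.
  move=> i i0 ik; apply/eqP => E.
  have := Z _ _ (perm_split_nseq c d ik); rewrite sigma_nseq E => /(_ erefl).
  by case: i i0 {ik E}.
set P := [set d *+ (val i) | i : 'I_k.+1].
have injP : injective (fun i : 'I_k.+1 => d *+ val i).
  move=> i j /= E; apply: val_inj => /=.
  case: (ltngtP i j) => // ij.
    have h := dn (j - i)%N; rewrite mulrnBr ?(ltnW ij) // E subrr eqxx in h.
    have h1 : (0 < j - i)%N by lia.
    have h2 : (j - i <= k)%N by have := ltn_ord j; lia.
    by have := h h1 h2.
  have h := dn (i - j)%N; rewrite mulrnBr ?(ltnW ij) // E subrr eqxx in h.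
  have h1 : (0 < i - j)%N by lia.
  have h2 : (i - j <= k)%N by have := ltn_ord i; lia.
  by have := h h1 h2.
have cP : #|P| = k.+1 by rewrite card_imset // card_ord.
set Q := [set c + x | x in P].
have cQ : #|Q| = k.+1 by rewrite card_imset //; exact: addrI.
have disj : P :&: Q = set0.
  apply/setP => x; rewrite !inE; apply/negbTE/negP.
  case/andP => /imsetP [i _ ->] /imsetP [y /imsetP [j _ ->] E].
  have ik := ltn_ord i; have jk := ltn_ord j.
  case: (leqP i j) => ij.
    have Hp : perm_eq (c :: nseq k d) ((c :: nseq (j - i) d) ++ nseq (k - (j - i)) d).
      by rewrite /= -nseqD subnKC //; lia.
    have := Z _ _ Hp; rewrite sigma_cons sigma_nseq mulrnBr // addrA -E subrr.
    by move=> /(_ erefl).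
  have ce : c = d *+ (i - j) by rewrite mulrnBr ?(ltnW ij) // E addrK.
  have ek : (i - j <= k)%N by lia.
  have e0 : (0 < i - j)%N by lia.
  move: ce ek e0; move: (i - j)%N => e ce ek e0.
  have e1 : e != 1%N by apply/eqP => e1; rewrite ce e1 mulr1n eqxx in cd.
  have e2 : (2 <= e)%N by move: e1 e0; lia.
  have H' : perm_eq S ((c :: nseq e d) ++ (nseq (k - e) d ++ R)).
    by move: H; rewrite -{1}(subnKC ek) nseqD /= -catA.
  apply: (obstruct H' _ (t := d)); first by case: (nseq _ _) => //=; case: R R0.
  move=> b /Asub_nseq [l le ->].
  case: (ltnP l e) => le'.
    exists (nseq l.+1 d), (c :: nseq (e - l.+1) d); split => //.
      exact: perm_split_nseq.
    by rewrite sigma_nseq mulrS.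
  have -> : l = e by apply/eqP; rewrite eqn_leq le le'.
  clear H' ek le le' e1 e0.
  case: e ce e2 => [|e'] // ce e2.
  exists [:: c; d], (nseq e' d); split => //.
  - by case: e' ce e2.
  - by rewrite /sigma !big_cons big_nil addr0 ce mulrSr addrC.
have sub : P :|: Q \subset Asub (c :: nseq k d).
  apply/subsetP => x; rewrite in_setU => /orP [/imsetP [i _ ->] | /imsetP [y /imsetP [i _ ->] ->]].
    by rewrite /= in_setU Asub_nseq_in // -ltnS ltn_ord.
  rewrite /= in_setU; apply/orP; right; apply/imsetP; exists (d *+ val i) => //.
  by apply: Asub_nseq_in; rewrite -ltnS ltn_ord.
apply: leq_trans (subset_leq_card sub).
by rewrite cardsU disj cards0 subn0 cP cQ; lia.
Qed.


Lemma MC U R : perm_eq S (U ++ R) -> (2 <= size R)%N -> dist2 U ->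
  (2 * size U <= #|Asub U|)%N.
Proof.
have [n] := ubnP (size U); elim: n U R => // n IH U R /ltnSE Usz H R2 D.
have R0 : R != [::] by case: R R2 H.
have Z := zsf_proper H R0.
have U2 := dist2_size D.
have S2 : (2 <= size S)%N by rewrite (perm_size H) size_cat; lia.
have nz : forall x, x \in U -> x != 0.
  by move=> x xU; apply: nonzero => //; rewrite (perm_mem H) mem_cat xU.
have notfull := Asub_not_full H R2.
case: (ltnP 2 (size U)) => U3; last first.
  have sz2 : size U = 2%N by apply/eqP; rewrite eqn_leq U3 U2.
  case: D => a [b [ha hb ab]].
  case: U {IH Usz U3 Z nz notfull U2} H ha hb sz2 => [|u1 [|u2 [|? ?]]] //= H ha hb _.
  have u12 : u1 != u2.
    apply: contra ab => /eqP u12; move: ha hb; rewrite !inE -u12 !orbb.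
    by move=> /eqP -> /eqP ->.
  by have := base H R0 u12.
case: (find2 U3 D) => [[y [z [yz yU zU Dy Dz]]]|[c [d [cd Hc]]]]; last first.
  have Hk : perm_eq S ((c :: nseq (size U).-1 d) ++ R).
    by apply: perm_trans H _; rewrite perm_cat2r.
  have := caseB Hk R0 cd; rewrite -(perm_Asub Hc) prednK; last by lia.
  by apply; lia.
have key : forall w, w \in U -> dist2 (rem w U) ->
    (2 * size U <= #|Asub U|)%N \/ APlt w #|Asub U| (Asub U).
  move=> w wU Dw.
  have Hw : perm_eq U (w :: rem w U) := perm_to_rem wU.
  have HV : perm_eq S (rem w U ++ (w :: R)).
    apply: perm_trans H _; apply: perm_trans (perm_cat Hw (perm_refl R)) _.
    by rewrite -cat1s -catA perm_catCA.
  have szV : size (rem w U) = (size U).-1 := size_rem wU.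
  have IHV := IH (rem w U) (w :: R) _ HV _ Dw.
  have {IHV} IHV : (2 * size (rem w U) <= #|Asub (rem w U)|)%N.
    by apply: IHV => /=; [rewrite szV; lia | apply: leqW].
  have ZV := zsf_perm Hw Z; case/zsf_consE: ZV => _ wV.
  have AU : Asub U = Asub (rem w U) :|: [set w + a | a in Asub (rem w U)].
    by rewrite (perm_Asub Hw).
  case: (leqP #|Asub U| (#|Asub (rem w U)|).+1) => Hc; last first.
    by left; rewrite szV in IHV; move: IHV Hc; lia.
  right.
  have w0 := nz w wU.
  have Hc' : (#|Asub (rem w U) :|: [set (w + a)%R | a in Asub (rem w U)]|
      <= #|Asub (rem w U)|.+1)%N by rewrite -AU.
  have HA := SR pr cardG w0 (Asub0 _) wV Hc'.
  have AVnf : Asub (rem w U) != setT by apply: contra wV => /eqP ->; rewrite in_setT.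
  have cardU : #|Asub U| = #|Asub (rem w U)|.+1.
    by rewrite AU; apply: (card_APlt pr cardG w0 _ HA); exact: card_lt_p AVnf.
  by rewrite cardU AU.
case: (key y yU Dy) => [//|Ay]; case: (key z zU Dz) => [//|Az].
have y0 := nz y yU; have z0 := nz z zU.
have Np := card_lt_p notfull.
have N2 : (1 < #|Asub U|)%N.
  apply/card_gt1P; exists 0, y; split; [exact: Asub0 | | by rewrite eq_sym].
  by have := @Asub_complete _ U [:: y] (rem y U) (perm_to_rem yU); rewrite /sigma big_seq1.
by move: yz; rewrite (APU pr cardG y0 z0 Np N2 Ay Az) eqxx.
Qed.


Lemma no_a_nseq a b k : perm_eq S (a :: nseq k b) -> a != b -> False.
Proof.
move=> H ab.
have aS : a \in S by rewrite (perm_mem H) mem_head.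
have Hr : perm_eq (rem a S) (nseq k b) by have := perm_rem a H; rewrite /= eqxx.
have full : Asub (nseq k b) = setT by rewrite -(perm_Asub Hr) Hsplit.
have pk : (p <= k.+1)%N.
  rewrite -cardG -full.
  have sub : Asub (nseq k b) \subset [set b *+ (val i) | i : 'I_k.+1].
    apply/subsetP => x /Asub_nseq [i ik ->]; apply/imsetP.
    by exists (Ordinal (ik : (i < k.+1)%N)).
  apply: leq_trans (subset_leq_card sub) _.
  by apply: leq_trans (leq_imset_card _ _) _; rewrite card_ord.
have Zn : zsf (nseq k b).
  apply: (zsf_proper (u := [:: a])) => //.
  by apply: perm_trans H _; rewrite -cat1s perm_catC.
have kp : (k < p)%N.
  rewrite ltnNge; apply/negP => pk'.
  have Hp : perm_eq (nseq k b) (nseq p b ++ nseq (k - p) b) by rewrite -nseqD subnKC.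
  have := Zn _ _ Hp; rewrite sigma_nseq (mulrn_p pr cardG) => /(_ erefl).
  by case: p pr {pk pk' Hp} => //.
have kE : k.+1 = p by apply/eqP; rewrite eqn_leq pk kp.
have := Hsig; rewrite (perm_sigma H) sigma_cons sigma_nseq.
have : b *+ k.+1 = 0 by rewrite kE (mulrn_p pr cardG).
rewrite mulrSr => /eqP; rewrite addr_eq0 => /eqP ->.
by move/eqP; rewrite subr_eq0 (negbTE ab).
Qed.

Lemma bound : dist2 S -> (2 * size S <= p + 2)%N.
Proof.
move=> D; have S2 := dist2_size D; have p2 := prime_gt1 pr.
case: (ltnP 3 (size S)) => S4; last first.
  case: (ltnP 2 (size S)) => S3; last by lia.
  case: D => a [b [ha hb ab]].
  have hb' : b \in rem a S by apply: in_rem; rewrite // eq_sym.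
  have H : perm_eq S ([:: a; b] ++ rem b (rem a S)).
    by apply: perm_trans (perm_to_rem ha) _; rewrite /= perm_cons; exact: perm_to_rem.
  have R0 : rem b (rem a S) != [::].
    apply/eqP => E; have := perm_size H; rewrite E /=; lia.
  have := base H R0 ab.
  have : (#|Asub [:: a; b]| <= p)%N by rewrite -cardG; apply: subset_leq_card; apply: subsetT.
  have sz3 : size S = 3%N by apply/eqP; rewrite eqn_leq S4 S3.
  by move=> h1 h2; have h := leq_trans h2 h1; rewrite sz3; lia.
have [g [x [gS xS gx Dgx]]] : exists g x,
    [/\ g \in S, x \in rem g S, g != x & dist2 (rem x (rem g S))].
  have helper : forall a b, a \in S -> b \in S -> a != b -> (count_mem a S <= 1)%N ->
      exists g x, [/\ g \in S, x \in rem g S, g != x & dist2 (rem x (rem g S))].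
    move=> a b ha hb ab Ca.
    have Ca0 : count_mem a (rem a S) = 0%N.
      by rewrite count_rem ha /= eqxx /=; apply/eqP; rewrite subn_eq0.
    have aS' : a \notin rem a S by apply/count_memPn.
    have hb' : b \in rem a S by apply: in_rem; rewrite // eq_sym.
    have sz : size (rem a S) = (size S).-1 := size_rem ha.
    case: (boolP (all (pred1 b) (rem a S))) => Hall.
      move/all_pred1P: Hall => E; exfalso.
      by apply: (no_a_nseq (k := size (rem a S)) _ ab); rewrite -E; exact: perm_to_rem.
    have D' : dist2 (rem a S).
      case/allPn: Hall => c hc /= cb; by exists c, b; split.
    have S3' : (3 <= size (rem a S))%N by rewrite sz; lia.
    case: (find1 S3' D') => x hx Dx.
    exists a, x; split=> //.
    by apply/negP => /eqP ax; move: aS'; rewrite {1}ax hx.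
  case: D => a [b [ha hb ab]].
  case: (ltnP 1 (count_mem a S)) => Ca; last exact: (helper a b).
  case: (ltnP 1 (count_mem b S)) => Cb; last by apply: (helper b a) => //; rewrite eq_sym.
  have ba : b != a by rewrite eq_sym.
  exists a, b; split=> //; first exact: in_rem.
  exists a, b; split=> //.
    apply: in_rem => //; apply: in_rem2; exact: Ca.
  apply: in_rem2; rewrite count_rem ha /= (negbTE ab) subn0; exact: Cb.
set U := rem x (rem g S).
have H : perm_eq S ((g :: x :: U) ++ [::]).
  by rewrite cats0; apply: perm_trans (perm_to_rem gS) _; rewrite perm_cons; exact: perm_to_rem.
have HU : perm_eq S (U ++ [:: x; g]).
  apply: perm_trans H _; rewrite cats0; apply/seq.permP => P.
  by rewrite count_cat /=; lia.
have Hg : perm_eq S ((g :: U) ++ [:: x]).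
  apply: perm_trans H _; rewrite cats0; apply/seq.permP => P.
  by rewrite count_cat /=; lia.
have Hx : perm_eq S ((x :: U) ++ [:: g]).
  apply: perm_trans H _; rewrite cats0; apply/seq.permP => P.
  by rewrite count_cat /=; lia.
have MU := MC HU (isT : (2 <= size [:: x; g])%N) Dgx.
case/zsf_consE: (zsf_proper Hg isT) => _ ng.
case/zsf_consE: (zsf_proper Hx isT) => _ nx.
have sub : Asub U \subset [set: G] :\ (- g) :\ (- x).
  apply/subsetP => w wU; rewrite !inE andbT.
  by apply/andP; split; apply/eqP => E; [move: nx | move: ng]; rewrite -E wU.
have Hs := subset_leq_card sub.
have gx' : (- x != - g) by rewrite eqr_opp eq_sym.
have e1 := cardsD1 (- g) [set: G]; rewrite in_setT cardG in e1.
have e2 := cardsD1 (- x) ([set: G] :\ - g); rewrite !inE gx' /= in e2.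
have HH : (2 * size U + 2 <= p)%N.
  have := leq_trans MU Hs; rewrite e1 e2 => h; apply: (leq_trans (leq_add h (leqnn 2))).
  by rewrite add1n add1n addn2; exact: leqnn.
have szU : size S = (size U).+2.
  by have := perm_size HU; rewrite size_cat /= addn2.
by rewrite szU; lia.
Qed.

End Main.



Theorem lemma2p10 (p : nat) (G : finZmodType) (S T : seq G) :
  prime p -> #|[set: G]| = p ->
  unsplittable S -> subseqm T S -> (2 <= #|supp T|)%N ->
  exists2 g : G, g \in supp T &
    (2 * size (rem g T) - 1 <= #|Sigma (rem g T)|)%N.
Proof.
move=> pr cardG [Hm Hns] Hsub Hsupp.
have [a [b [ha hb ab]]] : exists a b, [/\ a \in T, b \in T & a != b].
  by case/card_gt1P: Hsupp => a [b [ha hb ab]]; exists a, b; rewrite !inE in ha hb.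
have DT : dist2 T by exists a, b.
have [R HR] := subseqm_perm Hsub.
have DS : dist2 S by exists a, b; rewrite !(perm_mem HR) !mem_cat ha hb.
case: S Hm Hns HR Hsub DS => [|s0 s1] Hm Hns HR Hsub DS.
  by have := perm_mem HR a; rewrite mem_cat ha.
set S := s0 :: s1 in Hm Hns HR Hsub DS *.
case/minimal_cons: Hm => Hsig /Izsf_zsf Z1.
have Hmin : forall t u, perm_eq S (t ++ u) -> sigma t = 0 -> t = [::] \/ u = [::].
  move=> t u H Ht.
  have xin : s0 \in t ++ u by rewrite -(perm_mem H) mem_head.
  rewrite mem_cat in xin; case/orP: xin => xin.
    have Ht' := perm_to_rem xin.
    have H2 : perm_eq (s0 :: s1) (s0 :: (rem s0 t ++ u)).
      by apply: (perm_trans H); rewrite -cat_cons perm_cat2r.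
    rewrite perm_cons in H2.
    have Hu : sigma u = 0.
      by move: Hsig; rewrite (perm_sigma H) sigma_cat Ht add0r.
    right; apply: (Z1 u (rem s0 t)) => //.
    by apply: perm_trans H2 _; rewrite perm_catC.
  have Hu := perm_to_rem xin.
  have H2 : perm_eq (s0 :: s1) (s0 :: (t ++ rem s0 u)).
    apply: (perm_trans H); apply: (@perm_trans _ (t ++ s0 :: rem s0 u)).
      by rewrite perm_cat2l.
    by rewrite -cat1s perm_catCA.
  rewrite perm_cons in H2.
  by left; apply: Z1 H2 Ht.
have Hsplit : forall h, h \in S -> Asub (rem h S) = setT.
  move=> h hS; apply/setP => c; rewrite in_setT; apply/negPn/negP => Hc.
  set W := rem h S.
  have HW : perm_eq S (h :: W) := perm_to_rem hS.
  have sW : h + sigma W = 0 by rewrite -sigma_cons -(perm_sigma HW) Hsig.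
  have sW' : sigma W = - h by apply/eqP; rewrite -addr_eq0 addrC sW.
  apply: Hns; exists h, (- c), (h + c); split => //.
    by rewrite addrCA addNr addr0.
  apply/minimal_cons; split.
    by rewrite !sigma_cons addrA addrCA addNr addr0 sW.
  apply/Izsf_zsf; apply: zsf_consI.
    apply: (zsf_proper Hmin (u := [:: h])) => //.
    by apply: perm_trans HW _; rewrite -cat1s perm_catC.
  apply/negP => /Asub_sound [t [u [Ht Hs]]].
  have E : sigma W = sigma t + sigma u by rewrite -sigma_cat (perm_sigma Ht).
  have Esu : sigma u = sigma W - sigma t by rewrite E (addrC (sigma t)) addrK.
  have : sigma u \in Asub W.
    by apply: (Asub_complete (u := t)); apply: perm_trans Ht _; rewrite perm_catC.
  by rewrite Esu sW' Hs opprK addrA addNr add0r (negbTE Hc).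
have S2 : (2 <= size S)%N by exact: dist2_size DS.
case: R HR => [|r R'] HR.
  rewrite cats0 in HR.
  exists a; first by rewrite inE.
  have Hra : perm_eq (rem a T) (rem a S) by apply: perm_rem; rewrite perm_sym.
  have aS : a \in S by rewrite (perm_mem HR).
  have full : Asub (rem a T) = setT by rewrite (perm_Asub Hra) Hsplit.
  have c1 := card_Asub_Sigma (rem a T); rewrite full cardG in c1.
  have bd := bound pr cardG Hmin Hsig Hsplit DS.
  have c2 : (p.-1 <= #|Sigma (rem a T)|)%N by rewrite -ltnS prednK ?prime_gt0.
  apply: leq_trans c2; rewrite size_rem // -(perm_size HR).
  move: bd; set n := size S; lia.
have R0 : r :: R' != [::] by [].
case: (ltnP 2 (size T)) => T3.
  case: (find1 T3 DT) => x hx Dx.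
  exists x; first by rewrite inE.
  have HU : perm_eq S (rem x T ++ (x :: r :: R')).
    apply: perm_trans HR _; apply: perm_trans (perm_cat (perm_to_rem hx) (perm_refl (r :: R'))) _.
    by rewrite -cat1s -catA perm_catCA.
  have MU := MC pr cardG Hmin Hsplit HU (isT : (2 <= size (x :: r :: R'))%N) Dx.
  have c1 := card_Asub_Sigma (rem x T).
  have := leq_trans MU c1; move: (#|Sigma (rem x T)|) => m; set k := size (rem x T); lia.
have T2 : size T = 2%N by apply/eqP; rewrite eqn_leq T3 (dist2_size DT).
clear Hsupp; case: T Hsub HR DT ha hb T2 T3 => [|t1 [|t2 [|? ?]]] // Hsub HR DT ha hb _ _.
exists t1; first by rewrite inE mem_head.
rewrite /= eqxx /=.
have t2S : t2 \in S by rewrite (perm_mem HR) !inE eqxx orbT.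
have t20 : t2 != 0 := nonzero pr cardG Hmin S2 t2S.
have : t2 \in Sigma [:: t2].
  by apply: Asub_Sigma => //; have := Asub_sigma [:: t2]; rewrite /sigma big_seq1.
by move=> H; apply/card_gt0P; exists t2.
Qed.
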